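(* For every positive integer $n$ such that $h_{n-1}h_{n+1}-h_n^2\neq 0$, $$h_{n+3}=\frac{h_{n+1}^3-2h_nh_{n+1}h_{n+2}+h_{n-1}h_{n+2}^2}{h_{n-1}h_{n+1}-h_n^2}.$$
   Context: Let $p,q,a,b$ be complex numbers. The Horadam-Lucas sequence $(h_n)_{n\ge0}$ is defined by $h_0=2b-ap$, $h_1=bp-2aq$, and $h_n=ph_{n-1}-qh_{n-2}$ for $n\ge 2$. *)

(* Defs.v *)
From mathcomp Require Import all_boot all_order all_algebra.
From mathcomp Require Import complex.
From mathcomp Require Import reals.
Set Implicit Arguments. Unset Strict Implicit. Unset Printing Implicit Defensive.
Import GRing.Theory.
Local Open Scope ring_scope.

(* Horadam-Lucas sequence over a commutative ring:
   h_0 = 2b - a p, h_1 = b p - 2 a q, h_n = p h_{n-1} - q h_{n-2}. *)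
Fixpoint horadam_lucas_pair (F : comRingType) (p q a b : F) (n : nat) : F * F :=
  match n with
  | 0 => (2 * b - a * p, b * p - 2 * a * q)
  | m.+1 => let: (x, y) := horadam_lucas_pair p q a b m in (y, p * y - q * x)
  end.

Definition horadam_lucas (F : comRingType) (p q a b : F) (n : nat) : F :=
  (horadam_lucas_pair p q a b n).1.

(* Main.v *)
Require Import Defs.
From mathcomp Require Import all_boot all_order all_algebra.
From mathcomp Require Import complex reals.
From mathcomp Require Import ring.
Import GRing.Theory.
Local Open Scope ring_scope.

Lemma hl_rec (F : comRingType) (p q a b : F) m :
  horadam_lucas p q a b m.+2 =
  p * horadam_lucas p q a b m.+1 - q * horadam_lucas p q a b m.
Proof.
rewrite /horadam_lucas /=.
by case: (horadam_lucas_pair p q a b m) => x y /=.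
Qed.

Theorem mainTheorem4 (R : realType) (p q a b : R[i]) (n : nat) :
  (0 < n)%N ->
  let h := horadam_lucas p q a b in
  h n.-1 * h n.+1 - h n ^+ 2 != 0 ->
  h n.+3 = (h n.+1 ^+ 3 - 2 * h n * h n.+1 * h n.+2 + h n.-1 * h n.+2 ^+ 2)
           / (h n.-1 * h n.+1 - h n ^+ 2).
Proof.
case: n => [//|m] _ h /= HD.
rewrite /h in HD *.
rewrite !hl_rec in HD *.
move: HD.
generalize (horadam_lucas p q a b m) (horadam_lucas p q a b m.+1) => x y HD.
apply: (mulIf HD); rewrite divfK //.
ring.
Qed.
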